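(* Let $T\ge 3$ be an integer, let $M>1$, $\alpha\in(0,1)$ and $g(\alpha)\in(0,1)$, and set $g(0)=1$, $g(1)=0$. Let $x_1,\dots,x_T\in\{0,1\}$ (request arrivals) and let $c_1,\dots,c_T$ be real numbers with $0<c_{\min}\le c_t\le c_{\max}$ (rent costs). For a hosting sequence $r=(r_1,\dots,r_T)\in\{0,\alpha,1\}^T$ define its total cost $$C(r)=\sum_{t=1}^{T}\bigl(c_t r_t+g(r_t)x_t\bigr)+\sum_{t=1}^{T-1}M\,(r_{t+1}-r_t)^+ .$$ Let $r^*=(r^*_1,\dots,r^*_T)$ be an optimal offline hosting sequence, i.e. a minimizer of $C$ over all sequences in $\{0,\alpha,1\}^T$ (with the same prescribed initial value $r_1$ as the competing sequences). Let $(a,b)\in\{(0,\alpha),(0,1),(\alpha,1-\alpha)\}$ and let $2\le n\le m\le T-1$. If $r^*_{n-1}=a$, $r^*_t=a+b$ for all $n\le t\le m$, and $r^*_{m+1}=a$, then $$\bigl(g(a)-g(a+b)\bigr)\sum_{l=n}^{m}x_l\;\ge\; bM+b\sum_{l=n}^{m}c_l .$$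
   Context: This is the offline version of a partial service hosting problem at an edge server: in each time-slot $t$ a fraction $r_t\in\{0,\alpha,1\}$ of a service is hosted at the edge; hosting incurs rent $c_t r_t$, each request arriving in slot $t$ costs $g(r_t)$ to serve (the part not served at the edge), and increasing the hosted fraction from $r_t$ to $r_{t+1}$ incurs a fetch cost $M(r_{t+1}-r_t)^+$ (decreasing it is free). The offline optimal policy knows all $x_t$ and $c_t$ in advance and minimizes the total cost $C(r)$. *)

(* Defs.v *)
From mathcomp Require Import all_boot all_order all_algebra.
Set Implicit Arguments. Unset Strict Implicit. Unset Printing Implicit Defensive.
Import Order.TTheory GRing.Theory Num.Theory.
Local Open Scope ring_scope.

Definition host_level (R : realFieldType) (al v : R) : Prop :=
  v = 0 \/ v = al \/ v = 1.

Definition admissible (R : realFieldType) (T : nat) (al : R) (r : nat -> R) : Prop :=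
  forall t, (1 <= t <= T)%N -> host_level al (r t).

Definition cost (R : realFieldType) (T : nat) (c x : nat -> R) (g : R -> R) (M : R)
    (r : nat -> R) : R :=
  \sum_(1 <= t < T.+1) (c t * r t + g (r t) * x t)
  + \sum_(1 <= t < T) M * Num.max (r t.+1 - r t) 0.

Definition offline_opt (R : realFieldType) (T : nat) (al : R) (c x : nat -> R)
    (g : R -> R) (M : R) (rs : nat -> R) : Prop :=
  admissible T al rs /\
  forall r, admissible T al r -> r 1%N = rs 1%N -> cost T c x g M rs <= cost T c x g M r.

(* Main.v *)
Require Import Defs.
From mathcomp Require Import all_boot all_order all_algebra.
From mathcomp Require Import ring lra zify.
Import Order.TTheory GRing.Theory Num.Theory.
Local Open Scope ring_scope.

Lemma sum_diff (R : realFieldType) (f h : nat -> R) (lo hi n m : nat) :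
  (lo <= n)%N -> (n <= m.+1)%N -> (m.+1 <= hi)%N ->
  (forall t, ((t < n)%N || (m < t)%N) -> f t = h t) ->
  \sum_(lo <= t < hi) f t - \sum_(lo <= t < hi) h t
  = \sum_(n <= t < m.+1) (f t - h t).
Proof.
move=> h1 h2 h3 E.
have -> : \sum_(lo <= t < hi) f t - \sum_(lo <= t < hi) h t
        = \sum_(lo <= t < hi) (f t - h t).
  by rewrite big_split /= sumrN.
rewrite (big_cat_nat h1) /=; last by lia.
rewrite (big_cat_nat h2 h3) /=.
rewrite [\sum_(lo <= i < n) _]big_nat_cond big1; last first.
  by move=> i /andP[/andP[_ hi'] _]; rewrite E ?subrr // hi'.
rewrite [\sum_(m.+1 <= i < hi) _]big_nat_cond [X in _ + (_ + X)]big1 ?add0r ?addr0 //.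
move=> i /andP[/andP[hi' _] _]; rewrite E ?subrr //; apply/orP; right; lia.
Qed.

Theorem mainTheorem1 (R : realFieldType) (T : nat) (M al cmin cmax : R)
    (g : R -> R) (x c rs : nat -> R) (a b : R) (n m : nat) :
  (3 <= T)%N -> 1 < M -> 0 < al < 1 -> 0 < g al < 1 -> g 0 = 1 -> g 1 = 0 ->
  (forall t, (1 <= t <= T)%N -> x t = 0 \/ x t = 1) ->
  0 < cmin -> (forall t, (1 <= t <= T)%N -> cmin <= c t <= cmax) ->
  offline_opt T al c x g M rs ->
  ((a, b) = (0, al) \/ (a, b) = (0, 1) \/ (a, b) = (al, 1 - al)) ->
  (2 <= n)%N -> (n <= m)%N -> (m <= T - 1)%N ->
  rs n.-1 = a -> (forall t, (n <= t <= m)%N -> rs t = a + b) -> rs m.+1 = a ->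
  b * M + b * \sum_(n <= l < m.+1) c l <= (g a - g (a + b)) * \sum_(n <= l < m.+1) x l.
Proof.
move=> hT hM /andP[al0 al1] _ _ _ _ _ _ [adm opt] hab hn hnm hmT hn1 hin hm1.
have m0 : Num.max (0:R) 0 = 0 by apply/max_idPl.
have [ha hb] : (a = 0 \/ a = al) /\ 0 < b.
  case: hab => [[-> ->]|[[-> ->]|[-> ->]]]; split; try lra; by [left|right].
pose r' t := if (n <= t <= m)%N then a else rs t.
have adm' : admissible T al r'.
  move=> t ht; rewrite /r'; case: ifP => _; last exact: adm.
  by case: ha => ->; [left|right; left].
have r1 : r' 1%N = rs 1%N by rewrite /r' ifF //; apply/negbTE; lia.
have := opt r' adm' r1; rewrite /cost -subr_le0.
rewrite opprD addrACA.
rewrite (@sum_diff R (fun t => c t * rs t + g (rs t) * x t)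
   (fun t => c t * r' t + g (r' t) * x t) _ _ n m); first last.
- by move=> t ht; rewrite /r' ifF //; apply/negbTE; lia.
- lia.
- lia.
- lia.
rewrite (@sum_diff R (fun t => M * Num.max (rs t.+1 - rs t) 0)
   (fun t => M * Num.max (r' t.+1 - r' t) 0) _ _ n.-1 m); first last.
- by move=> t ht; rewrite /r' !ifF //; apply/negbTE; lia.
- lia.
- lia.
- lia.
have -> : \sum_(n <= t < m.+1) (c t * rs t + g (rs t) * x t - (c t * r' t + g (r' t) * x t))
   = \sum_(n <= t < m.+1) (b * c t + (g (a + b) - g a) * x t).
  rewrite big_nat_cond [RHS]big_nat_cond; apply: eq_bigr => t /andP[/andP[t1 t2] _].
  rewrite /r' ifT; last lia.
  rewrite hin; last lia.
  ring.
rewrite (@big_ltn _ _ _ n.-1 m.+1); last lia.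
have -> : n.-1.+1 = n by lia.
have -> : \sum_(n <= i < m.+1)
      (M * Num.max (rs i.+1 - rs i) 0 - M * Num.max (r' i.+1 - r' i) 0) = 0.
  rewrite big_nat_cond big1 //.
  move=> t /andP[/andP[t1 t2] _].
  have e1 : r' t = a by rewrite /r' ifT //; lia.
  rewrite e1 (hin t); last lia.
  case: (ltnP t m) => tm.
    have e2 : r' t.+1 = a by rewrite /r' ifT //; lia.
    rewrite e2 (hin t.+1); last lia.
    by rewrite (subrr (a + b)) (subrr a) m0 mulr0 subrr.
  have tm' : t = m by lia.
  have e2 : r' t.+1 = a by rewrite /r' ifF ?tm' //; apply/negbTE; lia.
  rewrite e2 tm' hm1 subrr m0.
  have -> : Num.max (a - (a + b)) 0 = 0 by apply/max_idPr; lra.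
  by rewrite mulr0 subrr.
rewrite /r' ifT; last lia.
rewrite ifF; last by apply/negbTE; lia.
rewrite hn1 hin; last lia.
have -> : Num.max (a + b - a) 0 = b.
  have -> : a + b - a = b by ring.
  by apply/max_idPl; lra.
rewrite subrr m0 mulr0 subr0 addr0.
rewrite big_split /= -mulr_sumr -mulr_sumr.
lra.
Qed.
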